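(* Let $q$ be a power of an odd prime $p$, and let $\ell$ be a linearized polynomial over $\mathbb F_{q^2}$. Then the function $f(x)=x^{q+1}+\ell(x^2)$ is planar on $\mathbb F_{q^2}$ if and only if $\ell(u)^2-\mathrm N(u)$ is a nonzero square in $\mathbb F_q$ for every $u\in\mathbb F_{q^2}^*$ such that $\ell(u)\in\mathbb F_q$.
   Context: $\mathrm N$ denotes the norm map from $\mathbb F_{q^2}$ to $\mathbb F_q$, $\mathrm N(u)=u^{q+1}$. A linearized polynomial over $\mathbb F_{q^2}$ is a polynomial of the form $\sum_i c_i x^{p^i}$ with $c_i\in\mathbb F_{q^2}$ (it induces an $\mathbb F_p$-linear endomorphism of $\mathbb F_{q^2}$). A function $f:\mathbb F_{q^n}\to\mathbb F_{q^n}$ (induced by a polynomial) is planar if for every $c\in\mathbb F_{q^n}^*$ the map $x\mapsto f(x+c)-f(x)$ is a permutation of $\mathbb F_{q^n}$. *)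

(* Defs.v *)
From mathcomp Require Import all_boot all_order all_algebra.
Set Implicit Arguments. Unset Strict Implicit. Unset Printing Implicit Defensive.
Import GRing.Theory.
Local Open Scope ring_scope.

Definition lin_eval (F : fieldType) (p : nat) (s : seq F) (x : F) : F :=
  \sum_(i < size s) s`_i * x ^+ (p ^ i).

Definition norm_q2q (F : fieldType) (q : nat) (u : F) : F := u ^+ q.+1.

Definition in_Fq (F : fieldType) (q : nat) (x : F) : bool := x ^+ q == x.

Definition planar (F : fieldType) (f : F -> F) : Prop :=
  forall c : F, c != 0 -> bijective (fun x => f (x + c) - f x).

(* Main.v *)
Require Import Defs.
From mathcomp Require Import all_boot all_order all_algebra.
From mathcomp Require Import finfield cyclic.
From mathcomp Require Import ring.
Set Implicit Arguments. Unset Strict Implicit. Unset Printing Implicit Defensive.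
Import GRing.Theory.
Local Open Scope ring_scope.

Lemma frobD (F : finFieldType) (q : nat) (hq : ([pchar F]).-nat q) (x y : F) :
  (x + y) ^+ q = x ^+ q + y ^+ q.
Proof. exact: exprDn_pchar. Qed.

Lemma frobN (F : finFieldType) (q : nat) (hq : ([pchar F]).-nat q) (q0 : (0 < q)%N) (x : F) :
  (- x) ^+ q = - (x ^+ q).
Proof.
apply/eqP; rewrite -subr_eq0 opprK -frobD // addNr expr0n.
by rewrite eqn0Ngt q0.
Qed.

Lemma frobB (F : finFieldType) (q : nat) (hq : ([pchar F]).-nat q) (q0 : (0 < q)%N) (x y : F) :
  (x - y) ^+ q = x ^+ q - y ^+ q.
Proof. by rewrite frobD // frobN. Qed.

Lemma frobqq (F : finFieldType) (q : nat) (hF : #|F| = (q ^ 2)%N) (x : F) :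
  x ^+ q ^+ q = x.
Proof. by rewrite -exprM mulnn -hF expf_card. Qed.

Lemma pnat_pow (F : finFieldType) (p i : nat) (hp : p \in [pchar F]) :
  ([pchar F]).-nat (p ^ i)%N.
Proof.
rewrite pnatX; case: eqP => [_|_]; first by rewrite orbT.
by rewrite pnatE ?hp // (pcharf_prime hp).
Qed.

Lemma lin_evalD (F : finFieldType) (p : nat) (hp : p \in [pchar F]) (s : seq F) (x y : F) :
  lin_eval p s (x + y) = lin_eval p s x + lin_eval p s y.
Proof.
rewrite /lin_eval -big_split /=; apply: eq_bigr => i _.
by rewrite exprDn_pchar ?mulrDr // pnat_pow.
Qed.

Lemma lin_eval0 (F : finFieldType) (p : nat) (hp : p \in [pchar F]) (s : seq F) :
  lin_eval p s 0 = 0.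
Proof.
by apply: (addrI (lin_eval p s 0)); rewrite -lin_evalD // !addr0.
Qed.

Lemma lin_evalN (F : finFieldType) (p : nat) (hp : p \in [pchar F]) (s : seq F) (x : F) :
  lin_eval p s (- x) = - lin_eval p s x.
Proof.
by apply/eqP; rewrite -subr_eq0 opprK -lin_evalD // addNr lin_eval0.
Qed.

Lemma lin_evalB (F : finFieldType) (p : nat) (hp : p \in [pchar F]) (s : seq F) (x y : F) :
  lin_eval p s (x - y) = lin_eval p s x - lin_eval p s y.
Proof. by rewrite lin_evalD // lin_evalN. Qed.

Lemma unity (F : finFieldType) (x : F) : x != 0 -> x ^+ #|F|.-1 = 1.
Proof.
move=> x0; apply: (mulIf x0); rewrite mul1r -exprSr prednK ?expf_card //.
by apply: (leq_trans _ (finNzRing_gt1 F)).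
Qed.

Lemma prim_exists (F : finFieldType) : exists g : F, (#|F|.-1).-primitive_root g.
Proof.
have F1 := finNzRing_gt1 F.
have /hasP[g _ ?] : has (#|F|.-1).-primitive_root (enum (predC1 (0 : F))); last by exists g.
apply: has_prim_root.
- by rewrite -ltnS prednK // (ltn_trans _ F1).
- by apply/allP=> x; rewrite mem_enum => x0; rewrite unity_rootE unity.
- by rewrite enum_uniq.
- by rewrite -cardE cardC1.
Qed.

From mathcomp Require Import zify.

Lemma cardm1 (F : finFieldType) (q : nat) (hF : #|F| = (q ^ 2)%N) (q1 : (1 < q)%N) :
  #|F|.-1 = (q.-1 * q.+1)%N.
Proof. rewrite hF -mulnn; case: q q1 {hF} => // q _ /=; nia. Qed.

Lemma prim_nz (F : finFieldType) (g : F) : (#|F|.-1).-primitive_root g -> g != 0.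
Proof.
move=> pg; apply/eqP=> g0; have := prim_expr_order pg; rewrite g0 expr0n.
case: eqP => [|_ /eqP]; last by rewrite eq_sym oner_eq0.
by have := finNzRing_gt1 F; case: #|F| => [|[]].
Qed.

Lemma sqrt_Fq (F : finFieldType) (q : nat) (hF : #|F| = (q ^ 2)%N) (q1 : (1 < q)%N)
  (qodd : odd q) (d : F) : d ^+ q = d -> exists s, s ^+ 2 = d.
Proof.
move=> dq; have [->|d0] := eqVneq d 0; first by exists 0; rewrite expr0n.
have [g pg] := prim_exists F.
have [[i _] /= di] := prim_rootP pg (unity d0).
have d1 : d ^+ q.-1 = 1.
  by apply: (mulIf d0); rewrite mul1r -exprSr prednK ?dq // ltnW.
have : (#|F|.-1 %| i * q.-1)%N by rewrite (prim_order_dvd pg) exprM -di d1.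
rewrite (cardm1 hF) // [(_ * q.+1)%N]mulnC dvdn_pmul2r; last by case: q q1 {dq d1 hF qodd}.
move=> hi; have : (2 %| i)%N.
  apply: dvdn_trans hi; by rewrite dvdn2 /= qodd.
case/dvdnP=> j ij; exists (g ^+ j); by rewrite -exprM di ij.
Qed.

Lemma hilbert90 (F : finFieldType) (q : nat) (hF : #|F| = (q ^ 2)%N) (q1 : (1 < q)%N)
  (w : F) : w ^+ q.+1 = 1 -> exists c : F, c != 0 /\ c ^+ q = w * c.
Proof.
move=> wq; have w0 : w != 0.
  by apply/eqP=> w0; move: wq; rewrite w0 expr0n /= => /eqP; rewrite eq_sym oner_eq0.
have [g pg] := prim_exists F.
have [[i _] /= di] := prim_rootP pg (unity w0).
have : (#|F|.-1 %| i * q.+1)%N by rewrite (prim_order_dvd pg) exprM -di wq.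
rewrite (cardm1 hF) // dvdn_pmul2r // => /dvdnP[j ij].
exists (g ^+ j); split; first by rewrite expf_neq0 // prim_nz.
by rewrite -{1}(prednK (ltnW q1)) exprS mulrC -exprM -ij di.
Qed.

Theorem proposition2p1 (F : finFieldType) (p k q : nat) (s : seq F) :
  prime p -> odd p -> (0 < k)%N -> q = (p ^ k)%N -> #|F| = (q ^ 2)%N ->
  planar (fun x : F => x ^+ q.+1 + lin_eval p s (x ^+ 2)) <->
  (forall u : F, u != 0 -> in_Fq q (lin_eval p s u) ->
     lin_eval p s u ^+ 2 - norm_q2q q u != 0 /\
     exists y : F, in_Fq q y /\ y ^+ 2 = lin_eval p s u ^+ 2 - norm_q2q q u).
Proof.
move=> pp podd k0 qE hF.
have hp : p \in [pchar F] by apply: (@card_finPcharP _ _ (k * 2)); rewrite // hF qE expnM.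
have hq : [pchar F].-nat q by rewrite qE pnat_pow.
have q1 : (1 < q)%N by rewrite qE -{1}(expn0 p) ltn_exp2l // prime_gt1.
have q0 : (0 < q)%N by apply: ltnW.
have qodd : odd q by rewrite qE oddX podd orbT.
have two0 : (2%:R : F) != 0.
  rewrite -(dvdn_pcharf hp); apply/negP => /(dvdn_leq (isT : (0 < 2)%N)) h.
  by move: h pp podd; case: (p) => [|[|[|]]].
set l := lin_eval p s.
have lD : forall x y, l (x + y) = l x + l y by move=> x y; apply: lin_evalD.
have lB : forall x y, l (x - y) = l x - l y by move=> x y; apply: lin_evalB.
have l0 : l 0 = 0 by apply: lin_eval0.
have l2 : forall x, l (x *+ 2) = l x *+ 2 by move=> x; rewrite !mulr2n lD.
pose A c z := z ^+ q * c + z * c ^+ q + l (z * c) *+ 2.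
have gE : forall c x, (x + c) ^+ q.+1 + l ((x + c) ^+ 2) - (x ^+ q.+1 + l (x ^+ 2))
    = A c x + (c ^+ q.+1 + l (c ^+ 2)).
  move=> c x; rewrite /A sqrrD !lD ?l2 (exprS (x + c) q) (exprS x q) (exprS c q) frobD //; ring.
have AB : forall c x y, A c (x - y) = A c x - A c y.
  by move=> c x y; rewrite /A frobB // !mulrBl lB; ring.
have A0 : forall c, A c 0 = 0.
  by move=> c; rewrite /A expr0n eqn0Ngt q0 !mul0r l0; ring.
split.
- move=> H u u0 /eqP au.
  have nE : norm_q2q q u = u ^+ q * u by rewrite /norm_q2q exprSr.
  have noT : forall t, t * t ^+ q = u ^+ q * u -> t + t ^+ q = - (l u *+ 2) -> False.
    move=> t tn tt.
    have n0 : u ^+ q * u != 0 by rewrite mulf_neq0 // expf_neq0.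
    have t0 : t != 0 by apply: contraNneq n0 => t0; rewrite -tn t0 mul0r.
    pose w := t / u.
    have w0 : w != 0 by rewrite mulf_neq0 // invr_eq0.
    have wq : w ^+ q.+1 = 1.
      by rewrite /w exprSr exprMn exprVn mulrACA -invfM [t ^+ q * t]mulrC tn mulfV.
    have [c [c0 cq]] := hilbert90 hF q1 wq.
    pose z := u / c.
    have zc : z * c = u by rewrite /z divfK.
    have zcq : z * c ^+ q = t by rewrite cq mulrCA zc /w divfK.
    have zqc : z ^+ q * c = t ^+ q.
      apply: (mulIf w0).
      have e1 : z ^+ q * c * w = u ^+ q by rewrite -mulrA [c * w]mulrC -cq -exprMn zc.
      have e2 : t ^+ q * w = u ^+ q by rewrite /w mulrA [t ^+ q * t]mulrC tn mulfK.
      by rewrite e1 e2.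
    have z0 : z != 0 by rewrite /z mulf_neq0 // invr_eq0.
    have Az : A c z = 0 by rewrite /A zqc zcq zc [t ^+ q + t]addrC tt addNr.
    have inj := bij_inj (H c c0).
    move/eqP: z0; apply; apply: inj.
    rewrite /=.
    by rewrite !gE Az A0.
  split.
  + apply/negP => /eqP D0; apply: (noT (- l u)).
    * rewrite frobN // au mulrNN -expr2; apply/eqP; rewrite -subr_eq0; apply/eqP.
      by rewrite -nE.
    * by rewrite frobN // au; ring.
  + have nq : (u ^+ q * u) ^+ q = u ^+ q * u by rewrite exprMn frobqq // mulrC.
    have Dq : (l u ^+ 2 - norm_q2q q u) ^+ q = l u ^+ 2 - norm_q2q q u.
      by rewrite nE frobB // exprAC au nq.
    have [r r2] := sqrt_Fq hF q1 qodd Dq.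
    have [rq|rq] := eqVneq (r ^+ q) r.
      by exists r; split; [rewrite /in_Fq rq | ].
    exfalso.
    have rqN : r ^+ q = - r.
      have : (r ^+ q) ^+ 2 == r ^+ 2 by rewrite exprAC !r2 Dq.
      by rewrite eqf_sqr (negbTE rq) /= => /eqP.
    rewrite nE in r2.
    apply: (noT (r - l u)).
    * rewrite frobB // rqN au.
      have -> : u ^+ q * u = l u ^+ 2 - r ^+ 2 by rewrite r2; ring.
      ring.
    * rewrite frobB // rqN au; ring.
- move=> H c c0; apply: injF_bij => x y hxy.
  have Axy : A c (x - y) = 0.
    move: hxy => /=; rewrite -/l !gE => /addIr Axy.
    by rewrite AB Axy subrr.
  apply/eqP; rewrite -subr_eq0; apply/eqP; move: Axy; move: (x - y) => z Az.
  have [//|z0] := eqVneq z 0; exfalso.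
  have u0 : z * c != 0 by rewrite mulf_neq0.
  pose t := z * c ^+ q.
  have tq : t ^+ q = z ^+ q * c by rewrite /t exprMn frobqq.
  have tt : t + t ^+ q = - (l (z * c) *+ 2).
    rewrite tq /t; apply: (addIr (l (z * c) *+ 2)); rewrite addNr -Az /A; ring.
  have aq : l (z * c) ^+ q = l (z * c).
    have e' : (t + t ^+ q) ^+ q = t + t ^+ q by rewrite frobD // frobqq // addrC.
    rewrite tt frobN // in e'; move/oppr_inj: e'.
    have two_q : (2%:R : F) ^+ q = 2%:R by rewrite mulr2n frobD // expr1n.
    rewrite -mulr_natr exprMn two_q => e.
    exact: (mulIf two0 e).
  have [D0 [y' [/eqP yq y2]]] := H _ u0 (introT eqP aq).
  have nE : norm_q2q q (z * c) = t * t ^+ q.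
    by rewrite tq /norm_q2q exprSr exprMn /t; ring.
  have hsq : (t + l (z * c)) ^+ 2 = y' ^+ 2.
    rewrite y2 nE.
    have h0 : t * (t + t ^+ q + l (z * c) *+ 2) = 0 by rewrite tt addNr mulr0.
    transitivity ((t + l (z * c)) ^+ 2 - t * (t + t ^+ q + l (z * c) *+ 2)).
      by rewrite h0 subr0.
    ring.
  have key : t ^+ q = t -> False.
    move=> tqt; move: tt; rewrite tqt => tt2.
    have : (t + l (z * c)) * 2%:R = 0 by rewrite mulr_natr mulrnDl mulr2n tt2 addNr.
    move/eqP; rewrite mulf_eq0 (negbTE two0) orbF => /eqP ht0.
    by move: D0; rewrite -y2 -hsq ht0 expr0n eqxx.
  move/eqP: hsq; rewrite eqf_sqr => /orP [] /eqP ht; apply: key.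
    have -> : t = y' - l (z * c) by rewrite -ht addrK.
    by rewrite frobB // yq aq.
  have -> : t = - y' - l (z * c) by rewrite -ht addrK.
  by rewrite frobB // frobN // yq aq.
Qed.
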